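(* Let $\mathcal A$ be an abelian category and $\mathcal T\subseteq\mathcal A$ a full subcategory consisting of objects which are both projective and injective, closed under finite direct sums and direct summands. Then the stable category $\underline{\mathcal A}=\mathcal A/\langle\mathcal T\rangle$ is balanced.
   Context: $\underline{\mathcal A}$ has the same objects as $\mathcal A$ and morphisms modulo those factoring through an object of $\mathcal T$. A category is balanced if every morphism that is both a monomorphism and an epimorphism is an isomorphism. *)

(* Defs.v *)
From HB Require Import structures.
From mathcomp Require Import all_boot all_algebra.
Set Implicit Arguments. Unset Strict Implicit. Unset Printing Implicit Defensive.
Import GRing.Theory.
Local Open Scope ring_scope.

Record precat := PreCat {
  Obj : Type;
  Hom : Obj -> Obj -> zmodType;
  idm : forall A : Obj, Hom A A;
  comp : forall A B C : Obj, Hom B C -> Hom A B -> Hom A C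
}.
Arguments idm {p} A.
Arguments comp {p A B C} g f.

Section Defs.
Variable C : precat.
Local Notation Obj := (Obj C).
Local Notation Hom := (@Hom C).
Local Notation "g \oc f" := (comp g f) (at level 40, left associativity).

Definition is_preadditive : Prop :=
  [/\ forall (A B : Obj) (f : Hom A B), idm B \oc f = f,
      forall (A B : Obj) (f : Hom A B), f \oc idm A = f,
      forall (A B D E : Obj) (h : Hom D E) (g : Hom B D) (f : Hom A B),
        h \oc (g \oc f) = (h \oc g) \oc f,
      forall (A B D : Obj) (g g' : Hom B D) (f : Hom A B),
        (g + g') \oc f = g \oc f + g' \oc f
    & forall (A B D : Obj) (g : Hom B D) (f f' : Hom A B),
        g \oc (f + f') = g \oc f + g \oc f'].

Definition is_zero_obj (Z : Obj) : Prop :=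
  forall A : Obj, (forall f : Hom A Z, f = 0) /\ (forall g : Hom Z A, g = 0).

Definition is_biproduct (S A B : Obj) (i1 : Hom A S) (i2 : Hom B S)
    (p1 : Hom S A) (p2 : Hom S B) : Prop :=
  [/\ p1 \oc i1 = idm A, p2 \oc i2 = idm B, p1 \oc i2 = 0, p2 \oc i1 = 0
    & i1 \oc p1 + i2 \oc p2 = idm S].

Definition is_kernel (A B K : Obj) (f : Hom A B) (k : Hom K A) : Prop :=
  f \oc k = 0 /\
  forall (X : Obj) (g : Hom X A), f \oc g = 0 ->
    exists u : Hom X K, k \oc u = g /\ forall u' : Hom X K, k \oc u' = g -> u' = u.

Definition is_cokernel (A B Q : Obj) (f : Hom A B) (q : Hom B Q) : Prop :=
  q \oc f = 0 /\
  forall (X : Obj) (g : Hom B X), g \oc f = 0 ->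
    exists u : Hom Q X, u \oc q = g /\ forall u' : Hom Q X, u' \oc q = g -> u' = u.

Definition is_mono (A B : Obj) (f : Hom A B) : Prop :=
  forall (X : Obj) (g h : Hom X A), f \oc g = f \oc h -> g = h.

Definition is_epi (A B : Obj) (f : Hom A B) : Prop :=
  forall (X : Obj) (g h : Hom B X), g \oc f = h \oc f -> g = h.

Definition is_abelian : Prop :=
  is_preadditive /\
  (exists Z : Obj, is_zero_obj Z) /\
  (forall A B : Obj, exists (S : Obj) (i1 : Hom A S) (i2 : Hom B S)
      (p1 : Hom S A) (p2 : Hom S B), is_biproduct i1 i2 p1 p2) /\
  (forall (A B : Obj) (f : Hom A B), exists (K : Obj) (k : Hom K A), is_kernel f k) /\
  (forall (A B : Obj) (f : Hom A B), exists (Q : Obj) (q : Hom B Q), is_cokernel f q) /\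
  (forall (A B : Obj) (f : Hom A B), is_mono f ->
      exists (Q : Obj) (g : Hom B Q), is_kernel g f) /\
  (forall (A B : Obj) (f : Hom A B), is_epi f ->
      exists (K : Obj) (g : Hom K A), is_cokernel g f).

Definition is_projective (P : Obj) : Prop :=
  forall (A B : Obj) (e : Hom A B), is_epi e ->
    forall f : Hom P B, exists g : Hom P A, e \oc g = f.

Definition is_injective (I : Obj) : Prop :=
  forall (A B : Obj) (m : Hom A B), is_mono m ->
    forall f : Hom A I, exists g : Hom B I, g \oc m = f.

(* The full subcategory T is given by a predicate on objects. *)
Variable T : Obj -> Prop.

Definition closed_under_direct_sums : Prop :=
  forall (S A B : Obj) (i1 : Hom A S) (i2 : Hom B S) (p1 : Hom S A) (p2 : Hom S B),
    is_biproduct i1 i2 p1 p2 -> T A -> T B -> T S.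

Definition closed_under_direct_summands : Prop :=
  forall (S A B : Obj) (i1 : Hom A S) (i2 : Hom B S) (p1 : Hom S A) (p2 : Hom S B),
    is_biproduct i1 i2 p1 p2 -> T S -> T A /\ T B.

Definition factors_through_T (A B : Obj) (f : Hom A B) : Prop :=
  exists (X : Obj) (u : Hom A X) (v : Hom X B), T X /\ f = v \oc u.

Inductive in_ideal_T (A B : Obj) : Hom A B -> Prop :=
  | ideal0 : in_ideal_T 0
  | ideal_fact (f : Hom A B) : factors_through_T f -> in_ideal_T f
  | idealD (f g : Hom A B) : in_ideal_T f -> in_ideal_T g -> in_ideal_T (f + g).

(* Equality of morphisms in the stable category A/<T>. *)
Definition st_eq (A B : Obj) (f g : Hom A B) : Prop := in_ideal_T (f - g).

(* Monos, epis and isos in the stable category (morphisms = classes mod <T>,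
   composition of classes = class of the composite). *)
Definition st_mono (A B : Obj) (f : Hom A B) : Prop :=
  forall (X : Obj) (g h : Hom X A), st_eq (f \oc g) (f \oc h) -> st_eq g h.

Definition st_epi (A B : Obj) (f : Hom A B) : Prop :=
  forall (X : Obj) (g h : Hom B X), st_eq (g \oc f) (h \oc f) -> st_eq g h.

Definition st_iso (A B : Obj) (f : Hom A B) : Prop :=
  exists g : Hom B A, st_eq (g \oc f) (idm A) /\ st_eq (f \oc g) (idm B).

Definition stable_balanced : Prop :=
  forall (A B : Obj) (f : Hom A B), st_mono f -> st_epi f -> st_iso f.

End Defs.

(* Main.v *)
Require Import Defs.
From mathcomp Require Import all_boot all_algebra.
Set Implicit Arguments. Unset Strict Implicit. Unset Printing Implicit Defensive.
Import GRing.Theory.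
Local Open Scope ring_scope.

Section Helpers.
Variable C : precat.
Hypothesis HP : is_preadditive C.
Local Notation Hm := (@Defs.Hom C).
Local Notation "g <o f" := (@Defs.comp C _ _ _ g f) (at level 40, left associativity).

Lemma cidl (A B : Obj C) (f : Hm A B) : idm B <o f = f.
Proof. by case: HP. Qed.
Lemma cidr (A B : Obj C) (f : Hm A B) : f <o idm A = f.
Proof. by case: HP. Qed.
Lemma cA (A B D E : Obj C) (h : Hm D E) (g : Hm B D) (f : Hm A B) :
  h <o (g <o f) = (h <o g) <o f.
Proof. by case: HP. Qed.
Lemma cDl (A B D : Obj C) (g g' : Hm B D) (f : Hm A B) :
  (g + g') <o f = g <o f + g' <o f.
Proof. by case: HP. Qed.
Lemma cDr (A B D : Obj C) (g : Hm B D) (f f' : Hm A B) :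
  g <o (f + f') = g <o f + g <o f'.
Proof. by case: HP. Qed.

Lemma c0r (A B D : Obj C) (g : Hm B D) : g <o (0 : Hm A B) = 0.
Proof.
have h := cDr g (0 : Hm A B) 0; rewrite addr0 in h.
move/(congr1 (fun z => z - g <o 0)): h; rewrite subrr addrK => h; by rewrite -h.
Qed.
Lemma c0l (A B D : Obj C) (f : Hm A B) : (0 : Hm B D) <o f = 0.
Proof.
have h := cDl (0 : Hm B D) 0 f; rewrite addr0 in h.
move/(congr1 (fun z => z - 0 <o f)): h; rewrite subrr addrK => h; by rewrite -h.
Qed.
Lemma cNr (A B D : Obj C) (g : Hm B D) (f : Hm A B) : g <o (- f) = - (g <o f).
Proof.
have h := cDr g f (-f); rewrite subrr c0r in h.
by apply/eqP; rewrite -addr_eq0 addrC -h.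
Qed.
Lemma cNl (A B D : Obj C) (g : Hm B D) (f : Hm A B) : (- g) <o f = - (g <o f).
Proof.
have h := cDl g (-g) f; rewrite subrr c0l in h.
by apply/eqP; rewrite -addr_eq0 addrC -h.
Qed.
Lemma cBr (A B D : Obj C) (g : Hm B D) (f f' : Hm A B) :
  g <o (f - f') = g <o f - g <o f'.
Proof. by rewrite cDr cNr. Qed.
Lemma cBl (A B D : Obj C) (g g' : Hm B D) (f : Hm A B) :
  (g - g') <o f = g <o f - g' <o f.
Proof. by rewrite cDl cNl. Qed.

Variable T : Obj C -> Prop.

Lemma fact_ideal (A B : Obj C) (f : Hm A B) : factors_through_T T f -> in_ideal_T T f.
Proof. exact: ideal_fact. Qed.

Lemma ideal_compl (A B D : Obj C) (g : Hm B D) (f : Hm A B) :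
  in_ideal_T T f -> in_ideal_T T (g <o f).
Proof.
elim=> [|h [X [u [v [TX ->]]]]|f1 f2 _ IH1 _ IH2].
- rewrite c0r; exact: ideal0.
- apply: ideal_fact; exists X, u, (g <o v); split => //; by rewrite cA.
- rewrite cDr; exact: idealD.
Qed.

Lemma ideal_compr (A B D : Obj C) (g : Hm B D) (f : Hm A B) :
  in_ideal_T T g -> in_ideal_T T (g <o f).
Proof.
elim=> [|h [X [u [v [TX ->]]]]|f1 f2 _ IH1 _ IH2].
- rewrite c0l; exact: ideal0.
- apply: ideal_fact; exists X, (u <o f), v; split => //; by rewrite cA.
- rewrite cDl; exact: idealD.
Qed.

Lemma ideal_opp (A B : Obj C) (f : Hm A B) : in_ideal_T T f -> in_ideal_T T (- f).
Proof.
elim=> [|h [X [u [v [TX ->]]]]|f1 f2 _ IH1 _ IH2].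
- rewrite oppr0; exact: ideal0.
- apply: ideal_fact; exists X, u, (- v); split => //; by rewrite cNl.
- rewrite opprD; exact: idealD.
Qed.

Lemma ideal_split (A B : Obj C) (f : Hm A B) :
  closed_under_direct_sums T ->
  (forall A B : Obj C, exists (S : Obj C) (i1 : Hm A S) (i2 : Hm B S)
      (p1 : Hm S A) (p2 : Hm S B), is_biproduct i1 i2 p1 p2) ->
  in_ideal_T T f -> f = 0 \/ factors_through_T T f.
Proof.
move=> Hds Hbp; elim=> [|h Hh|f1 f2 _ [->|H1] _ [->|H2]].
- by left.
- by right.
- by left; rewrite addr0.
- by right; rewrite add0r.
- by right; rewrite addr0.
- right; case: H1 => [X1 [u1 [v1 [T1 ->]]]]; case: H2 => [X2 [u2 [v2 [T2 ->]]]].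
  have [S [i1 [i2 [p1 [p2 Hb]]]]] := Hbp X1 X2.
  exists S, (i1 <o u1 + i2 <o u2), (v1 <o p1 + v2 <o p2); split.
    exact: (Hds _ _ _ _ _ _ _ Hb).
  case: Hb => e1 e2 e3 e4 _.
  rewrite cDr !cDl -!cA (cA p1 i1) (cA p2 i1) (cA p1 i2) (cA p2 i2) e1 e2 e3 e4.
  by rewrite !c0l !c0r addr0 add0r !cidl.
Qed.


Hypothesis Hds : closed_under_direct_sums T.
Hypothesis Hbp : forall A B : Obj C, exists (S : Obj C) (i1 : Hm A S) (i2 : Hm B S)
      (p1 : Hm S A) (p2 : Hm S B), is_biproduct i1 i2 p1 p2.
Hypothesis Hpi : forall X : Obj C, T X -> is_projective X /\ is_injective X.
Hypothesis Hcok : forall (A B : Obj C) (f : Hm A B), exists (Q : Obj C) (q : Hm B Q), is_cokernel f q.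
Hypothesis Hmk : forall (A B : Obj C) (f : Hm A B), is_mono f ->
      exists (Q : Obj C) (g : Hm B Q), is_kernel g f.

Lemma cok_epi (A B Q : Obj C) (f : Hm A B) (q : Hm B Q) : is_cokernel f q -> is_epi q.
Proof.
move=> [qf Hq] X a b eab.
have H0 : (a <o q) <o f = 0 by rewrite -cA qf c0r.
have [u [_ Hu]] := Hq X _ H0.
by rewrite (Hu a) // (Hu b).
Qed.

Lemma step2 (A S : Obj C) (g : Hm A S) : is_mono g ->
  (forall (Q : Obj C) (q : Hm S Q), is_cokernel g q -> in_ideal_T T q) ->
  exists h : Hm S A, st_eq T (g <o h) (idm S).
Proof.
move=> gm Hq.
have [Q [q qc]] := Hcok g.
have qI := Hq _ _ qc.
have [Q' [g' [g'g Hg']]] := Hmk gm.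
have fac : forall x : Hm S S, q <o x = 0 -> exists y : Hm S A, g <o y = x.
  move=> x qx.
  case: qc => qg Hqc.
  have [u [ug _]] := Hqc _ g' g'g.
  have H0 : g' <o x = 0 by rewrite -ug -cA qx c0r.
  have [y [gy _]] := Hg' _ x H0.
  by exists y.
case: (ideal_split Hds Hbp qI) => [q0|[Y [u [v [TY quv]]]]].
  have H0 : q <o idm S = 0 by rewrite q0 c0l.
  have [y gy] := fac (idm S) H0.
  by exists y; rewrite /st_eq gy subrr; exact: ideal0.
have [w qw] := (Hpi TY).1 _ _ q (cok_epi qc) v.
have H0 : q <o (idm S - w <o u) = 0 by rewrite cBr cidr cA qw quv subrr.
have [y gy] := fac _ H0.
exists y; rewrite /st_eq gy addrC addKr.
apply: ideal_opp; apply: ideal_fact; by exists Y, u, w.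
Qed.

Lemma final (A B S : Obj C) (f : Hm A B) (g : Hm A S) (p1 : Hm S B) (i1 : Hm B S)
  (h : Hm S A) :
  st_mono T f -> p1 <o g = f -> p1 <o i1 = idm B -> st_eq T (g <o h) (idm S) ->
  st_iso T f.
Proof.
move=> Hm pg pi gh.
have fr : st_eq T (f <o (h <o i1)) (idm B).
  rewrite /st_eq; have -> : f <o (h <o i1) - idm B = p1 <o ((g <o h - idm S) <o i1).
    by rewrite cBl cidl cBr pi -pg -!cA.
  by apply: ideal_compl; apply: ideal_compr.
exists (h <o i1); split => //.
apply: Hm; rewrite /st_eq cidr.
have -> : f <o (h <o i1 <o f) - f = (f <o (h <o i1) - idm B) <o f by rewrite cBl cidl cA.
exact: ideal_compr.
Qed.
End Helpers.

Notation "g <o f" := (Defs.comp g f) (at level 40, left associativity).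

Theorem corollary4p7 (C : precat) (T : Obj C -> Prop) :
  is_abelian C ->
  (forall X : Obj C, T X -> is_projective X /\ is_injective X) ->
  closed_under_direct_sums T ->
  closed_under_direct_summands T ->
  stable_balanced T.
Proof.
move=> [HP [_ [Hbp [Hker [Hcok [Hmk _]]]]]] Hpi Hds _ A B f Hm He.
have [K [k [fk0 Hk]]] := Hker _ _ f.
have kmono : is_mono k.
  move=> X a b eab.
  have H0 : f <o (k <o a) = 0 by rewrite (cA HP) fk0 (c0l HP).
  have [u [_ Hu]] := Hk X _ H0.
  by rewrite (Hu a erefl) (Hu b (esym eab)).
have kst : in_ideal_T T k.
  have := Hm K k 0; rewrite /st_eq subr0.
  apply; rewrite fk0 (c0r HP) subr0; exact: ideal0.
case: (ideal_split HP Hds Hbp kst) => [k0|[X [u [v [TX kuv]]]]].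
  have fm : is_mono f.
    move=> Y a b eab; apply/eqP; rewrite -subr_eq0; apply/eqP.
    have H0 : f <o (a - b) = 0 by rewrite (cBr HP) eab subrr.
    have [e [ke _]] := Hk Y _ H0.
    by rewrite -ke k0 (c0l HP).
  have [h hh] : exists h, st_eq T (f <o h) (idm B).
    apply: (step2 HP Hds Hbp Hpi Hcok Hmk fm).
    move=> Q q [qf _].
    have := He Q q 0; rewrite /st_eq subr0; apply; rewrite qf (c0l HP) subr0; exact: ideal0.
  exact: (final HP Hm (cidl HP f) (cidl HP (idm B)) hh).
have umono : is_mono u.
  move=> Y a b eab; apply: kmono; by rewrite kuv -!(cA HP) eab.
have [w wk] := (Hpi X TX).2 _ _ k kmono u.
have [S [i1 [i2 [p1 [p2 [e1 e2 e3 e4 e5]]]]]] := Hbp B X.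
have [g gdef] : exists g, g = i1 <o f + i2 <o w by eexists.
have pg : p1 <o g = f by rewrite gdef (cDr HP) !(cA HP) e1 e3 (cidl HP) (c0l HP) addr0.
have p2g : p2 <o g = w by rewrite gdef (cDr HP) !(cA HP) e2 e4 (cidl HP) (c0l HP) add0r.
have gm : is_mono g.
  move=> Y a b eab; apply/eqP; rewrite -subr_eq0; apply/eqP.
  have gd : g <o (a - b) = 0 by rewrite (cBr HP) eab subrr.
  have H0 : f <o (a - b) = 0 by rewrite -pg -(cA HP) gd (c0r HP).
  have [e [ke _]] := Hk Y _ H0.
  have ue : u <o e = u <o 0 by rewrite (c0r HP) -wk -(cA HP) ke -p2g -(cA HP) gd (c0r HP).
  by rewrite -ke (umono _ _ _ ue) (c0r HP).
have [h hh] : exists h, st_eq T (g <o h) (idm S).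
  apply: (step2 HP Hds Hbp Hpi Hcok Hmk gm).
  move=> Q q [qg _].
  have H1 : in_ideal_T T (q <o i1 - 0).
    apply: He; rewrite /st_eq (c0l HP) subr0.
    have -> : q <o i1 <o f = - (q <o i2 <o w).
      by apply/eqP; rewrite -addr_eq0 -!(cA HP) -(cDr HP) -gdef qg.
    apply: (ideal_opp HP); apply: ideal_fact; by exists X, w, (q <o i2).
  rewrite subr0 in H1.
  have -> : q = q <o i1 <o p1 + q <o i2 <o p2 by rewrite -!(cA HP) -(cDr HP) e5 (cidr HP).
  apply: idealD; first exact: (ideal_compr HP).
  apply: ideal_fact; by exists X, p2, (q <o i2).
exact: (final HP Hm pg e1 hh).
Qed.
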